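(* Let $\mathcal{M}=\langle M,\circ,e\rangle$ be an mge monoid and let $\langle m_1,\dots,m_l\rangle,\langle n_1,\dots,n_l\rangle\in M^l$ have a joint equalizer. Then every mge for $\langle m_1,\dots,m_l\rangle$ is an mge for $\langle n_1,\dots,n_l\rangle$ and vice versa. Furthermore $Eq^{(l)}(m_1,\dots,m_l)=Eq^{(l)}(n_1,\dots,n_l)$.
   Context: In a monoid $\langle M,\circ,e\rangle$, a tuple $\langle m_1,\dots,m_n\rangle\in M^n$ is equalizable if there is $\langle x_1,\dots,x_n\rangle\in M^n$ (an equalizer) with $m_1x_1=\dots=m_nx_n$; $Eq^{(n)}(m_1,\dots,m_n)\subseteq M^n$ denotes the set of all equalizers of $\langle m_1,\dots,m_n\rangle$. An equalizer is a most general equalizer (mge) if every equalizer has the form $\langle x_1x,\dots,x_nx\rangle$ for some $x\in M$. An mge monoid is a monoid with right cancellation ($ac=bc\Rightarrow a=b$) in which every equalizable pair has an mge. A tuple $\langle x_1,\dots,x_n\rangle$ is a joint equalizer for $\langle m_1,\dots,m_n\rangle$ and $\langle m'_1,\dots,m'_n\rangle$ if it is an equalizer for both (it is not required that $m_ix_i=m'_ix_i$). *)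

(* Defs.v *)
From mathcomp Require Import all_boot.
Set Implicit Arguments. Unset Strict Implicit. Unset Printing Implicit Defensive.

Record monoid := Monoid {
  carrier :> Type;
  mop : carrier -> carrier -> carrier;
  munit : carrier;
  mopA : forall a b c, mop a (mop b c) = mop (mop a b) c;
  mop1l : forall a, mop munit a = a;
  mop1r : forall a, mop a munit = a }.

Section Defs.
Variable M : monoid.
Local Notation "a * b" := (mop a b).

Definition equalizer (n : nat) (m x : 'I_n -> M) : Prop :=
  forall i j : 'I_n, m i * x i = m j * x j.


Definition equalizable (n : nat) (m : 'I_n -> M) : Prop :=
  exists x, equalizer m x.

Definition mge (n : nat) (m x : 'I_n -> M) : Prop :=
  equalizer m x /\
  forall y : 'I_n -> M, equalizer m y -> exists z : M, forall i, y i = x i * z.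

Definition right_cancellative : Prop :=
  forall a b c : M, a * c = b * c -> a = b.

Definition pair2 (a b : M) : 'I_2 -> M := fun i => if val i == 0 then a else b.

Definition mge_monoid : Prop :=
  right_cancellative /\
  forall a b : M, equalizable (pair2 a b) -> exists x, mge (pair2 a b) x.

Definition Eqset (n : nat) (m : 'I_n -> M) : ('I_n -> M) -> Prop := fun x => equalizer m x.

Definition joint_equalizer (n : nat) (m m' x : 'I_n -> M) : Prop :=
  equalizer m x /\ equalizer m' x.
End Defs.

(* Main.v *)
Require Import Defs.
From mathcomp Require Import all_boot.

Set Implicit Arguments.
Section S.
Variable M : monoid.
Local Notation "a * b" := (mop a b).

Definition o0 : 'I_2 := @Ordinal 2 0 isT.
Definition o1 : 'I_2 := @Ordinal 2 1 isT.

Lemma eq_pair2 (a b y1 y2 : M) : a * y1 = b * y2 ->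
  equalizer (pair2 a b) (pair2 y1 y2).
Proof.
move=> H [[|[|k]] Hi] [[|[|k']] Hj] //=; rewrite /pair2 /=.
all: by rewrite ?H.
Qed.

Lemma pair_lemma (a b c d p q y1 y2 : M) : mge_monoid M ->
  a * p = b * q -> c * p = d * q -> a * y1 = b * y2 -> c * y1 = d * y2.
Proof.
move=> [rc hm] H1 H2 Hy.
have [u [Hu Hg]] : exists u, mge (pair2 a b) u.
  by apply: hm; exists (pair2 y1 y2); apply: eq_pair2.
have [z Hz] := Hg _ (@eq_pair2 _ _ _ _ H1).
have [w Hw] := Hg _ (@eq_pair2 _ _ _ _ Hy).
have Hu01 := Hu o0 o1. rewrite /pair2 /= in Hu01.
have Ez0 := Hz o0. have Ez1 := Hz o1. have Ew0 := Hw o0. have Ew1 := Hw o1.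
rewrite /pair2 /= in Ez0 Ez1 Ew0 Ew1.
have Hcd : c * u o0 = d * u o1.
  apply: (rc _ _ z); by rewrite -!mopA -Ez0 -Ez1.
by rewrite Ew0 Ew1 !mopA Hcd.
Qed.

Lemma eq_iff (l : nat) (m n : 'I_l -> M) x0 : mge_monoid M ->
  joint_equalizer m n x0 -> forall y, equalizer m y -> equalizer n y.
Proof.
move=> hM [Hm Hn] y Hy i j.
exact: (@pair_lemma _ _ _ _ _ _ _ _ hM (Hm i j) (Hn i j) (Hy i j)).
Qed.
End S.

Theorem lemma3 (M : monoid) (l : nat) (m n : 'I_l -> M) :
  mge_monoid M ->
  (exists x, joint_equalizer m n x) ->
  (forall x, mge m x -> mge n x) /\
  (forall x, mge n x -> mge m x) /\
  (forall x, Eqset m x <-> Eqset n x).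
Proof.
move=> hM [x0 Hj].
have Hj' : joint_equalizer n m x0 by case: Hj.
have E1 := eq_iff hM Hj. have E2 := eq_iff hM Hj'.
split; [|split].
- move=> x [Hx Hg]; split; first exact: E1.
  by move=> y /E2; apply: Hg.
- move=> x [Hx Hg]; split; first exact: E2.
  by move=> y /E1; apply: Hg.
- by move=> x; split; [apply: E1|apply: E2].
Qed.
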